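(* In the right-angled Artin group $A(P_3)=\langle a,b,c\mid ab=ba,\ bc=cb\rangle$ we have \[\langle ab,c\rangle\cap\langle a,bc\rangle\cap\langle a,c\rangle=[\langle a,c\rangle,\langle a,c\rangle].\]
   Context: $[\langle a,c\rangle,\langle a,c\rangle]$ denotes the commutator (derived) subgroup of the subgroup $\langle a,c\rangle$. *)

(* Defs.v *)
(* The right-angled Artin group A(P_3) = < a,b,c | ab=ba, bc=cb >
   is modelled literally by its presentation: elements are words in the
   letters a^{+-1}, b^{+-1}, c^{+-1}, and two words represent the same group
   element iff they are related by the smallest equivalence relation that is
   closed under inserting/deleting x x^{-1} (free reduction) and applying the
   defining relators ab = ba, bc = cb inside a word. *)
From Stdlib Require Import List Relation_Operators.
Import ListNotations.

Inductive gen : Type := Ga | Gb | Gc.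

(* a letter is a generator together with a flag: true = inverse *)
Definition letter : Type := (gen * bool)%type.
Definition word : Type := list letter.

Definition flip (x : letter) : letter := (fst x, negb (snd x)).

Inductive step : word -> word -> Prop :=
  | step_cancel (u v : word) (x : letter) :
      step (u ++ [x; flip x] ++ v) (u ++ v)
  | step_ab (u v : word) :
      step (u ++ [(Ga, false); (Gb, false)] ++ v) (u ++ [(Gb, false); (Ga, false)] ++ v)
  | step_bc (u v : word) :
      step (u ++ [(Gb, false); (Gc, false)] ++ v) (u ++ [(Gc, false); (Gb, false)] ++ v).

Definition weq : word -> word -> Prop := clos_refl_sym_trans word step.

Definition wmul (u v : word) : word := u ++ v.
Definition winv (u : word) : word := rev (map flip u).
Definition wcomm (g h : word) : word := winv g ++ winv h ++ g ++ h.

Definition wa : word := [(Ga, false)].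
Definition wb : word := [(Gb, false)].
Definition wc : word := [(Gc, false)].

Definition gensub (S : word -> Prop) (w : word) : Prop :=
  exists l : list (word * bool),
    Forall (fun p : word * bool => S (fst p)) l /\
    weq w (concat (map (fun p : word * bool => if snd p then winv (fst p) else fst p) l)).

Definition gensubl (gs : list word) : word -> Prop :=
  gensub (fun s => exists g, In g gs /\ weq s g).

Definition derived (H : word -> Prop) : word -> Prop :=
  gensub (fun s => exists g h, H g /\ H h /\ weq s (wcomm g h)).

(* Main.v *)
Require Import Defs.
From Stdlib Require Import List.
Import ListNotations.
From Stdlib Require Import Relation_Operators ZArith Lia Setoid Morphisms Bool.

Ltac lnorm := simpl; repeat (rewrite <- app_assoc; simpl); rewrite ?app_nil_r; try reflexivity.

Lemma weq_refl u : weq u u. Proof. apply rst_refl. Qed.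
Lemma weq_sym u v : weq u v -> weq v u. Proof. apply rst_sym. Qed.
Lemma weq_trans u v w : weq u v -> weq v w -> weq u w. Proof. apply rst_trans. Qed.
Lemma weq_step u v : step u v -> weq u v. Proof. apply rst_step. Qed.

#[global] Instance weq_equiv : Equivalence weq.
Proof. split; red; [apply weq_refl|apply weq_sym|apply weq_trans]. Qed.

Lemma weq_eq u v : u = v -> weq u v. Proof. intros ->; reflexivity. Qed.

Lemma step_ctx x y u v : step u v -> step (x ++ u ++ y) (x ++ v ++ y).
Proof.
  intros H; destruct H as [u0 v0 l | u0 v0 | u0 v0].
  - replace (x ++ (u0 ++ [l; flip l] ++ v0) ++ y) with ((x ++ u0) ++ [l; flip l] ++ (v0 ++ y)) by lnorm.
    replace (x ++ (u0 ++ v0) ++ y) with ((x ++ u0) ++ (v0 ++ y)) by lnorm.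
    constructor.
  - replace (x ++ (u0 ++ [(Ga, false); (Gb, false)] ++ v0) ++ y) with ((x ++ u0) ++ [(Ga, false); (Gb, false)] ++ (v0 ++ y)) by lnorm.
    replace (x ++ (u0 ++ [(Gb, false); (Ga, false)] ++ v0) ++ y) with ((x ++ u0) ++ [(Gb, false); (Ga, false)] ++ (v0 ++ y)) by lnorm.
    constructor.
  - replace (x ++ (u0 ++ [(Gb, false); (Gc, false)] ++ v0) ++ y) with ((x ++ u0) ++ [(Gb, false); (Gc, false)] ++ (v0 ++ y)) by lnorm.
    replace (x ++ (u0 ++ [(Gc, false); (Gb, false)] ++ v0) ++ y) with ((x ++ u0) ++ [(Gc, false); (Gb, false)] ++ (v0 ++ y)) by lnorm.
    constructor.
Qed.

Lemma weq_ctx x y u v : weq u v -> weq (x ++ u ++ y) (x ++ v ++ y).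
Proof.
  intros H; induction H.
  - apply weq_step, step_ctx; auto.
  - reflexivity.
  - symmetry; auto.
  - etransitivity; eauto.
Qed.

Lemma weq_app' u u' v v' : weq u u' -> weq v v' -> weq (u ++ v) (u' ++ v').
Proof.
  intros Hu Hv. transitivity (u' ++ v).
  - pose proof (weq_ctx [] v u u' Hu) as H. simpl in H. exact H.
  - pose proof (weq_ctx u' [] v v' Hv) as H. rewrite !app_nil_r in H. exact H.
Qed.

#[global] Instance app_weq : Proper (weq ==> weq ==> weq) (@app letter).
Proof. intros u u' Hu v v' Hv. apply weq_app'; auto. Qed.

Lemma flip_flip x : flip (flip x) = x.
Proof. destruct x; unfold flip; simpl; rewrite negb_involutive; auto. Qed.

Lemma winv_app u v : winv (u ++ v) = winv v ++ winv u.
Proof. unfold winv; rewrite map_app, rev_app_distr; auto. Qed.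

Lemma winv_winv u : winv (winv u) = u.
Proof.
  unfold winv. rewrite map_rev, rev_involutive, map_map.
  induction u; simpl; f_equal; auto using flip_flip.
Qed.

Lemma winv_cons x u : winv (x :: u) = winv u ++ [flip x].
Proof. reflexivity. Qed.

Lemma cancel x : weq [x; flip x] [].
Proof. apply weq_step. exact (step_cancel [] [] x). Qed.

Lemma cancel' x : weq [flip x; x] [].
Proof. pose proof (cancel (flip x)) as H. rewrite flip_flip in H. exact H. Qed.

Lemma winv_r u : weq (u ++ winv u) [].
Proof.
  induction u as [|x u IH]; [reflexivity|].
  rewrite winv_cons.
  transitivity ([x] ++ (u ++ winv u) ++ [flip x]). { apply weq_eq; lnorm. }
  rewrite IH. simpl. apply cancel.
Qed.

Lemma winv_l u : weq (winv u ++ u) [].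
Proof. pose proof (winv_r (winv u)) as H. rewrite winv_winv in H. exact H. Qed.

Definition comm (x y : letter) := weq [x; y] [y; x].

Lemma comm_flip_r x y : comm x y -> comm x (flip y).
Proof.
  unfold comm; intros H.
  transitivity ([flip y; y] ++ [x; flip y]). { rewrite (cancel' y). reflexivity. }
  transitivity ([flip y] ++ [y; x] ++ [flip y]). { reflexivity. }
  rewrite <- H.
  transitivity ([flip y; x] ++ [y; flip y]). { reflexivity. }
  rewrite (cancel y). reflexivity.
Qed.

Lemma comm_sym x y : comm x y -> comm y x.
Proof. unfold comm; intros; symmetry; auto. Qed.

Lemma comm_ff x y : comm x y -> comm (flip y) (flip x).
Proof.
  intros H. apply comm_flip_r. apply comm_sym. apply comm_flip_r. exact H.
Qed.

Lemma cab : comm (Ga, false) (Gb, false).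
Proof. apply weq_step. exact (step_ab [] []). Qed.
Lemma cbc : comm (Gb, false) (Gc, false).
Proof. apply weq_step. exact (step_bc [] []). Qed.

Lemma step_winv u v : step u v -> weq (winv u) (winv v).
Proof.
  intros H; destruct H as [u0 v0 l | u0 v0 | u0 v0]; rewrite !winv_app.
  - assert (E : weq (winv [l; flip l]) []).
    { unfold winv; simpl. rewrite flip_flip. apply cancel. }
    rewrite E, app_nil_r. reflexivity.
  - apply weq_app'; [apply weq_app'; [reflexivity| exact (comm_ff _ _ cab)] | reflexivity].
  - apply weq_app'; [apply weq_app'; [reflexivity| exact (comm_ff _ _ cbc)] | reflexivity].
Qed.

#[global] Instance winv_weq : Proper (weq ==> weq) winv.
Proof.
  intros u v H; induction H.
  - apply step_winv; auto.
  - reflexivity.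
  - symmetry; auto.
  - etransitivity; eauto.
Qed.

#[global] Instance wcomm_weq : Proper (weq ==> weq ==> weq) wcomm.
Proof. intros g g' Hg h h' Hh. unfold wcomm. rewrite Hg, Hh. reflexivity. Qed.

Definition central (z : word) := forall w, weq (z ++ w) (w ++ z).

Lemma comm_word x w : (forall y, comm x y) -> weq ([x] ++ w) (w ++ [x]).
Proof.
  intros Hc. induction w as [|y w IH]; [reflexivity|].
  transitivity ([x; y] ++ w). { reflexivity. }
  rewrite (Hc y : weq [x; y] [y; x]).
  transitivity ([y] ++ ([x] ++ w)). { reflexivity. }
  rewrite IH. reflexivity.
Qed.

Lemma comm_b y : comm (Gb, false) y.
Proof.
  destruct y as [[] []].
  - exact (comm_flip_r _ _ (comm_sym _ _ cab)).
  - exact (comm_sym _ _ cab).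
  - exact (comm_flip_r _ _ (weq_refl _)).
  - apply weq_refl.
  - exact (comm_flip_r _ _ cbc).
  - exact cbc.
Qed.

Lemma central_b : central wb.
Proof. intro w. apply comm_word, comm_b. Qed.

Lemma central_inv z : central z -> central (winv z).
Proof.
  intros H w.
  transitivity (winv z ++ w ++ (z ++ winv z)). { rewrite (winv_r z), app_nil_r. reflexivity. }
  transitivity (winv z ++ (w ++ z) ++ winv z). { apply weq_eq; lnorm. }
  rewrite <- (H w).
  transitivity ((winv z ++ z) ++ w ++ winv z). { apply weq_eq; lnorm. }
  rewrite (winv_l z). reflexivity.
Qed.

Lemma central_nil : central [].
Proof. intro w. rewrite app_nil_r. reflexivity. Qed.

Definition gf (p : word * bool) : word := if snd p then winv (fst p) else fst p.

Lemma gensub_weq S u v : weq u v -> gensub S v -> gensub S u.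
Proof. intros H [l [Hl Hw]]. exists l; split; auto. etransitivity; eauto. Qed.

Lemma gensub_nil S : gensub S [].
Proof. exists []; split; [constructor | reflexivity]. Qed.

Lemma gensub_app S u v : gensub S u -> gensub S v -> gensub S (u ++ v).
Proof.
  intros [l1 [H1 W1]] [l2 [H2 W2]]. exists (l1 ++ l2); split.
  - apply Forall_app; auto.
  - rewrite map_app, concat_app. apply weq_app'; auto.
Qed.

Lemma concat_inv l :
  concat (map gf (rev (map (fun p : word * bool => (fst p, negb (snd p))) l)))
  = winv (concat (map gf l)).
Proof.
  induction l as [|p l IH]; [reflexivity|].
  simpl. rewrite map_app, concat_app, IH, winv_app. simpl. rewrite app_nil_r. f_equal.
  destruct p as [s []]; unfold gf; simpl; rewrite ?winv_winv; reflexivity.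
Qed.

Lemma gensub_inv S u : gensub S u -> gensub S (winv u).
Proof.
  intros [l [Hl W]].
  exists (rev (map (fun p : word * bool => (fst p, negb (snd p))) l)); split.
  - rewrite Forall_forall in *. intros p Hp. apply in_rev in Hp. apply in_map_iff in Hp.
    destruct Hp as [q [<- Hq]]. simpl. apply Hl; auto.
  - change (weq (winv u) (concat (map gf (rev (map (fun p : word * bool => (fst p, negb (snd p))) l))))).
    rewrite concat_inv. rewrite W. reflexivity.
Qed.

Lemma gensub_gen (S : word -> Prop) s : S s -> gensub S s.
Proof.
  intros H. exists [(s, false)]; split.
  - constructor; auto.
  - simpl. rewrite app_nil_r. reflexivity.
Qed.

Lemma gensub_min (S P : word -> Prop) :
  (forall u v, weq u v -> P v -> P u) -> P [] ->
  (forall u v, P u -> P v -> P (u ++ v)) -> (forall u, P u -> P (winv u)) ->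
  (forall s, S s -> P s) -> forall w, gensub S w -> P w.
Proof.
  intros Hw Hn Ha Hi Hs w [l [Hl W]]. apply (Hw _ _ W). clear w W.
  induction l as [|p l IH]; simpl; auto.
  inversion Hl; subst. apply Ha; auto.
  destruct p as [s []]; simpl in *; auto.
Qed.

Definition geqb (g h : gen) : bool :=
  match g, h with Ga, Ga | Gb, Gb | Gc, Gc => true | _, _ => false end.
Lemma geqb_eq g h : geqb g h = true -> g = h.
Proof. destruct g, h; simpl; congruence. Qed.
Lemma geqb_refl g : geqb g g = true.
Proof. destruct g; reflexivity. Qed.

Definition lex (g : gen) (x : letter) : Z :=
  if geqb (fst x) g then (if snd x then (-1)%Z else 1%Z) else 0%Z.
Fixpoint ex (g : gen) (w : word) : Z :=
  match w with [] => 0%Z | x :: w' => (lex g x + ex g w')%Z end.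

Lemma ex_app g u v : ex g (u ++ v) = (ex g u + ex g v)%Z.
Proof. induction u; simpl; lia. Qed.

Lemma lex_flip g x : lex g (flip x) = (- lex g x)%Z.
Proof. destruct x as [h []]; unfold lex, flip; simpl; destruct (geqb h g); lia. Qed.

Lemma ex_step g u v : step u v -> ex g u = ex g v.
Proof.
  destruct 1; rewrite !ex_app; cbn [ex].
  - rewrite lex_flip; lia.
  - destruct g; unfold lex; simpl; lia.
  - destruct g; unfold lex; simpl; lia.
Qed.

Lemma ex_weq g u v : weq u v -> ex g u = ex g v.
Proof. intros H; induction H; eauto using ex_step; congruence. Qed.

Lemma ex_winv g u : ex g (winv u) = (- ex g u)%Z.
Proof.
  induction u as [|x u IH]; [reflexivity|].
  rewrite winv_cons, ex_app. cbn [ex]. rewrite lex_flip, IH. lia.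
Qed.

Lemma ex_pos_in g v : (ex g v > 0)%Z -> In (g, false) v.
Proof.
  induction v as [|[h s] v IH]; cbn [ex]; intros H; [lia|].
  unfold lex in H; simpl in H.
  destruct (geqb h g) eqn:E; destruct s; try (right; apply IH; lia).
  left. apply geqb_eq in E; subst; reflexivity.
Qed.

Lemma ex_neg_in g v : (ex g v < 0)%Z -> In (g, true) v.
Proof.
  induction v as [|[h s] v IH]; cbn [ex]; intros H; [lia|].
  unfold lex in H; simpl in H.
  destruct (geqb h g) eqn:E; destruct s; try (right; apply IH; lia).
  left. apply geqb_eq in E; subst; reflexivity.
Qed.

Lemma gensub_lin S (F : word -> Z) :
  (forall u v, weq u v -> F u = F v) -> F [] = 0%Z ->
  (forall u v, F (u ++ v) = (F u + F v)%Z) -> (forall u, F (winv u) = (- F u)%Z) ->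
  (forall s, S s -> F s = 0%Z) -> forall w, gensub S w -> F w = 0%Z.
Proof.
  intros Hw Hn Ha Hi Hs. apply gensub_min; auto.
  - intros u v H1 H2. rewrite (Hw _ _ H1). auto.
  - intros u v H1 H2. rewrite Ha; lia.
  - intros u H. rewrite Hi; lia.
Qed.

Definition HH := gensubl [wa; wc].
Definition DD := derived HH.

Definition acword (u : word) := Forall (fun x : letter => fst x <> Gb) u.

Lemma ac_letter_H x : fst x <> Gb -> HH [x].
Proof.
  destruct x as [[] []]; simpl; intros Hx; try congruence.
  - change (HH (winv wa)). apply gensub_inv, gensub_gen. exists wa; split; [simpl; auto | reflexivity].
  - apply gensub_gen. exists wa; split; [simpl; auto | reflexivity].
  - change (HH (winv wc)). apply gensub_inv, gensub_gen. exists wc; split; [simpl; auto | reflexivity].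
  - apply gensub_gen. exists wc; split; [simpl; auto | reflexivity].
Qed.

Lemma ac_in_H u : acword u -> HH u.
Proof.
  induction u as [|x u IH]; intros Hu; [apply gensub_nil|].
  inversion Hu; subst. change (HH ([x] ++ u)). apply gensub_app; [apply ac_letter_H; auto | apply IH; auto].
Qed.

Lemma H_to_ac w : HH w -> exists u, acword u /\ weq w u.
Proof.
  revert w. apply (gensub_min _ (fun w => exists u, acword u /\ weq w u)).
  - intros u v H [x [Hx Hv]]. exists x; split; auto. etransitivity; eauto.
  - exists []; split; [constructor | reflexivity].
  - intros u v [x [Hx Hu]] [y [Hy Hv]]. exists (x ++ y); split.
    + apply Forall_app; auto.
    + rewrite Hu, Hv; reflexivity.
  - intros u [x [Hx Hu]]. exists (winv x); split.
    + unfold acword, winv in *. rewrite Forall_forall in *. intros p Hp.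
      apply in_rev in Hp. apply in_map_iff in Hp. destruct Hp as [q [<- Hq]].
      unfold flip; simpl. apply Hx; auto.
    + rewrite Hu; reflexivity.
  - intros s [g [Hin Hs]]. exists g; split; auto.
    destruct Hin as [<-|[<-|[]]]; repeat constructor; simpl; discriminate.
Qed.

Lemma gensub_H_closed_comm g h : HH g -> HH h -> HH (wcomm g h).
Proof.
  intros Hg Hh. unfold wcomm.
  repeat apply gensub_app; auto; apply gensub_inv; auto.
Qed.

Lemma D_sub_H w : DD w -> HH w.
Proof.
  apply gensub_min.
  - intros u v H Hv. eapply gensub_weq; eauto.
  - apply gensub_nil.
  - apply gensub_app.
  - apply gensub_inv.
  - intros s [g [h [Hg [Hh Hs]]]]. eapply gensub_weq; [exact Hs|].
    apply gensub_H_closed_comm; auto.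
Qed.

Lemma swap y z : weq (y ++ z) (z ++ y ++ wcomm y z).
Proof.
  symmetry; unfold wcomm.
  transitivity (z ++ (y ++ winv y) ++ winv z ++ y ++ z). { apply weq_eq; lnorm. }
  rewrite winv_r.
  transitivity ((z ++ winv z) ++ y ++ z). { apply weq_eq; lnorm. }
  rewrite winv_r. reflexivity.
Qed.

Lemma D_normal m k : HH m -> DD k -> DD (winv m ++ k ++ m).
Proof.
  intros Hm Hk.
  apply (gensub_weq _ _ (wcomm m (winv k) ++ k)).
  - symmetry; unfold wcomm. rewrite winv_winv.
    transitivity ((winv m ++ k ++ m) ++ (winv k ++ k)). { apply weq_eq; lnorm. }
    rewrite winv_l, app_nil_r. reflexivity.
  - apply gensub_app; auto. apply gensub_gen. exists m, (winv k). repeat split; auto.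
    + apply gensub_inv, D_sub_H; auto.
    + reflexivity.
Qed.

Lemma ac_D : forall n u, length u <= n -> acword u -> ex Ga u = 0%Z -> ex Gc u = 0%Z -> DD u.
Proof.
  induction n as [|n IHn]; intros u Hl Hac Ha Hc.
  - destruct u; [apply gensub_nil | simpl in Hl; lia].
  - destruct u as [|x v]; [apply gensub_nil|].
    assert (Hin : In (flip x) v).
    { inversion Hac; subst. destruct x as [g s]. simpl in H1.
      assert (E : ex g ((g, s) :: v) = 0%Z) by (destruct g; [exact Ha | congruence | exact Hc]).
      cbn [ex] in E. unfold lex in E; simpl in E. rewrite geqb_refl in E.
      unfold flip; simpl. destruct s; simpl.
      - apply ex_pos_in; lia.
      - apply ex_neg_in; lia. }
    apply in_split in Hin. destruct Hin as [v1 [v2 ->]].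
    assert (Hx : fst x <> Gb) by (inversion Hac; auto).
    assert (Hac' : acword v1 /\ acword v2).
    { inversion Hac; subst. apply Forall_app in H2. destruct H2 as [A B]. inversion B; auto. }
    destruct Hac' as [Ac1 Ac2].
    apply (gensub_weq _ _ (v1 ++ v2 ++ (winv v2 ++ wcomm v1 [flip x] ++ v2))).
    + transitivity ([x] ++ (v1 ++ [flip x]) ++ v2). { apply weq_eq; lnorm. }
      rewrite (swap v1 [flip x]).
      transitivity ([x; flip x] ++ v1 ++ wcomm v1 [flip x] ++ v2). { apply weq_eq; lnorm. }
      rewrite cancel.
      transitivity (v1 ++ (v2 ++ winv v2) ++ wcomm v1 [flip x] ++ v2).
      * rewrite winv_r. reflexivity.
      * apply weq_eq; lnorm.
    + rewrite app_assoc. apply gensub_app.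
      * apply IHn.
        -- simpl in Hl. rewrite length_app in *. simpl in Hl. lia.
        -- apply Forall_app; auto.
        -- cbn [ex] in Ha. rewrite ex_app in *. cbn [ex] in Ha. rewrite lex_flip in Ha. lia.
        -- cbn [ex] in Hc. rewrite ex_app in *. cbn [ex] in Hc. rewrite lex_flip in Hc. lia.
      * apply D_normal; [apply ac_in_H; auto|].
        apply gensub_gen. exists v1, [flip x]. repeat split.
        -- apply ac_in_H; auto.
        -- apply ac_letter_H. destruct x; simpl in *; auto.
        -- reflexivity.
Qed.

Lemma H_dec (S : word -> Prop) :
  (exists k z, gensub S k /\ central z /\ weq wa (k ++ z)) ->
  (exists k z, gensub S k /\ central z /\ weq wc (k ++ z)) ->
  forall g, HH g -> exists k z, gensub S k /\ central z /\ weq g (k ++ z).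
Proof.
  intros Ea Ec. apply (gensub_min _ (fun g => exists k z, gensub S k /\ central z /\ weq g (k ++ z))).
  - intros u v H [k [z [Hk [Hz Hv]]]]. exists k, z; repeat split; auto. etransitivity; eauto.
  - exists [], []; repeat split; [apply gensub_nil | apply central_nil | reflexivity].
  - intros u v [k [z [Hk [Hz Hu]]]] [k' [z' [Hk' [Hz' Hv]]]].
    exists (k ++ k'), (z ++ z'); repeat split.
    + apply gensub_app; auto.
    + intro w. rewrite <- app_assoc, (Hz' w), app_assoc, (Hz w), <- app_assoc. reflexivity.
    + rewrite Hu, Hv.
      transitivity (k ++ (z ++ k') ++ z'). { apply weq_eq; lnorm. }
      rewrite (Hz k'). apply weq_eq; lnorm.
  - intros u [k [z [Hk [Hz Hu]]]]. exists (winv k), (winv z); repeat split.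
    + apply gensub_inv; auto.
    + apply central_inv; auto.
    + rewrite Hu, winv_app. apply (central_inv z Hz).
  - intros s [g [Hin Hs]]. destruct Hin as [<-|[<-|[]]].
    + destruct Ea as [k [z [A [B C]]]]. exists k, z; repeat split; auto. rewrite Hs; auto.
    + destruct Ec as [k [z [A [B C]]]]. exists k, z; repeat split; auto. rewrite Hs; auto.
Qed.

Lemma comm_cent_l z k h : central z -> weq (wcomm (k ++ z) h) (wcomm k h).
Proof.
  intros Hz. unfold wcomm. rewrite winv_app.
  transitivity (winv z ++ ((winv k ++ winv h ++ k) ++ z) ++ h). { apply weq_eq; lnorm. }
  rewrite <- (Hz (winv k ++ winv h ++ k)).
  transitivity ((winv z ++ z) ++ (winv k ++ winv h ++ k) ++ h). { apply weq_eq; lnorm. }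
  rewrite winv_l. apply weq_eq; lnorm.
Qed.

Lemma comm_cent_r z k h : central z -> weq (wcomm k (h ++ z)) (wcomm k h).
Proof.
  intros Hz. unfold wcomm. rewrite winv_app.
  transitivity (winv k ++ winv z ++ ((winv h ++ k ++ h) ++ z)). { apply weq_eq; lnorm. }
  rewrite <- (Hz (winv h ++ k ++ h)).
  transitivity (winv k ++ (winv z ++ z) ++ (winv h ++ k ++ h)). { apply weq_eq; lnorm. }
  rewrite winv_l. apply weq_eq; lnorm.
Qed.

Lemma D_in_K (S : word -> Prop) :
  (exists k z, gensub S k /\ central z /\ weq wa (k ++ z)) ->
  (exists k z, gensub S k /\ central z /\ weq wc (k ++ z)) ->
  forall w, DD w -> gensub S w.
Proof.
  intros Ea Ec. apply gensub_min.
  - intros u v H Hv. eapply gensub_weq; eauto.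
  - apply gensub_nil.
  - apply gensub_app.
  - apply gensub_inv.
  - intros s [g [h [Hg [Hh Hs]]]].
    destruct (H_dec S Ea Ec g Hg) as [k [z [Hk [Hz Eg]]]].
    destruct (H_dec S Ea Ec h Hh) as [k' [z' [Hk' [Hz' Eh]]]].
    apply (gensub_weq _ _ (wcomm k k')).
    + rewrite Hs, Eg, Eh, (comm_cent_l z _ _ Hz), (comm_cent_r z' _ _ Hz'). reflexivity.
    + unfold wcomm. repeat apply gensub_app; auto; apply gensub_inv; auto.
Qed.

Theorem mainTheorem12 : forall w : word,
  (gensubl [wmul wa wb; wc] w /\ gensubl [wa; wmul wb wc] w /\ gensubl [wa; wc] w)
  <-> derived (gensubl [wa; wc]) w.
Proof.
  intros w; split.
  - intros [H1 [H2 H3]].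
    assert (E1 : (ex Gb w - ex Ga w)%Z = 0%Z).
    { refine (gensub_lin _ (fun w => (ex Gb w - ex Ga w)%Z) _ _ _ _ _ w H1).
      - intros u v H. rewrite (ex_weq Gb _ _ H), (ex_weq Ga _ _ H). reflexivity.
      - reflexivity.
      - intros u v. rewrite !ex_app. lia.
      - intros u. rewrite !ex_winv. lia.
      - intros s [g [Hin Hs]]. rewrite (ex_weq Gb _ _ Hs), (ex_weq Ga _ _ Hs).
        destruct Hin as [<-|[<-|[]]]; reflexivity. }
    assert (E2 : (ex Gb w - ex Gc w)%Z = 0%Z).
    { refine (gensub_lin _ (fun w => (ex Gb w - ex Gc w)%Z) _ _ _ _ _ w H2).
      - intros u v H. rewrite (ex_weq Gb _ _ H), (ex_weq Gc _ _ H). reflexivity.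
      - reflexivity.
      - intros u v. rewrite !ex_app. lia.
      - intros u. rewrite !ex_winv. lia.
      - intros s [g [Hin Hs]]. rewrite (ex_weq Gb _ _ Hs), (ex_weq Gc _ _ Hs).
        destruct Hin as [<-|[<-|[]]]; reflexivity. }
    assert (E3 : ex Gb w = 0%Z).
    { refine (gensub_lin _ (fun w => ex Gb w) _ _ _ _ _ w H3).
      - intros u v H. apply ex_weq; auto.
      - reflexivity.
      - intros u v. apply ex_app.
      - intros u. apply ex_winv.
      - intros s [g [Hin Hs]]. rewrite (ex_weq Gb _ _ Hs).
        destruct Hin as [<-|[<-|[]]]; reflexivity. }
    destruct (H_to_ac w H3) as [u [Hac Hu]].
    apply (gensub_weq _ w u Hu).
    apply (ac_D (length u)); auto.
    + rewrite <- (ex_weq Ga _ _ Hu). lia.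
    + rewrite <- (ex_weq Gc _ _ Hu). lia.
  - intros Hd. split; [|split].
    + apply D_in_K; auto.
      * exists (wmul wa wb), (winv wb); repeat split.
        -- apply gensub_gen. exists (wmul wa wb); split; [simpl; auto | reflexivity].
        -- apply central_inv, central_b.
        -- unfold wmul. rewrite <- app_assoc, winv_r, app_nil_r. reflexivity.
      * exists wc, []; repeat split.
        -- apply gensub_gen. exists wc; split; [simpl; auto | reflexivity].
        -- apply central_nil.
        -- rewrite app_nil_r. reflexivity.
    + apply D_in_K; auto.
      * exists wa, []; repeat split.
        -- apply gensub_gen. exists wa; split; [simpl; auto | reflexivity].
        -- apply central_nil.
        -- rewrite app_nil_r. reflexivity.
      * exists (wmul wb wc), (winv wb); repeat split.
        -- apply gensub_gen. exists (wmul wb wc); split; [simpl; auto | reflexivity].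
        -- apply central_inv, central_b.
        -- unfold wmul. rewrite (central_b wc), <- app_assoc, winv_r, app_nil_r. reflexivity.
    + apply D_sub_H; auto.
Qed.
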